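(* Let $\mu\in\mathcal P_c^*(\mathbb R^2)$, $\mathbf A\in\mathrm{GL}(2)$, $\mathbf y\in\mathbb R^2$ and $\mu_{\mathbf A,\mathbf y}=(\mathbf A\cdot+\mathbf y)_\#\mu$. Then for every $\theta\in\mathbb S_1$, $$\mathcal N_\theta[\mu_{\mathbf A,\mathbf y}]=\mathcal N_{\mathbf A^\top\theta/\|\mathbf A^\top\theta\|}[\mu].$$
   Context: $\mathbb S_1=\{x\in\mathbb R^2:\|x\|=1\}$; $\mathcal R_\theta[\mu]=(\langle\cdot,\theta\rangle)_\#\mu$. Fix a reference Borel probability measure $\rho$ on $\mathbb R$ without atoms. For a probability measure $\nu$ on $\mathbb R$ with $F_\nu(t)=\nu((-\infty,t])$, $F_\nu^{[-1]}(t)=\inf\{s:F_\nu(s)>t\}$ and the CDT is $\hat\nu=F_\nu^{[-1]}\circ F_\rho$; $\widehat{\mathcal R}_\theta[\mu]$ is the CDT of $\mathcal R_\theta[\mu]$. For $g\in L^2_\rho(\mathbb R)$, $\operatorname{mean}(g)=\int g\,\mathrm d\rho$, $\operatorname{std}(g)=(\int|g-\operatorname{mean}(g)|^2\mathrm d\rho)^{1/2}$. $\mathcal P_c^*(\mathbb R^2)$ is the set of compactly supported Borel probability measures on $\mathbb R^2$ whose support has affine hull of dimension $>1$. For such $\mu$, the normalized R-CDT is $\mathcal N_\theta[\mu](t)=\big(\widehat{\mathcal R}_\theta[\mu](t)-\operatorname{mean}(\widehat{\mathcal R}_\theta[\mu])\big)/\operatorname{std}(\widehat{\mathcal R}_\theta[\mu])$,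 $t\in\mathbb R$. *)

(* Defs.v *)
From HB Require Import structures.
From mathcomp Require Import all_boot all_order all_algebra.
From mathcomp Require Import all_classical all_reals all_analysis.
Set Implicit Arguments. Unset Strict Implicit. Unset Printing Implicit Defensive.
Import Order.TTheory GRing.Theory Num.Theory.
Import numFieldNormedType.Exports.
Local Open Scope classical_set_scope.
Local Open Scope ring_scope.

Definition dot2 {R : realType} (x v : R * R) : R := x.1 * v.1 + x.2 * v.2.

Definition norm2 {R : realType} (x : R * R) : R := Num.sqrt (dot2 x x).

Definition S1 {R : realType} : set (R * R) := [set x | norm2 x = 1].

Definition mxapp2 {R : realType} (A : 'M[R]_2) (x : R * R) : R * R :=
  (A 0 0 * x.1 + A 0 1 * x.2, A 1 0 * x.1 + A 1 1 * x.2).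

Definition scale2 {R : realType} (c : R) (x : R * R) : R * R := (c * x.1, c * x.2).

Definition affmap2 {R : realType} (A : 'M[R]_2) (y : R * R) (x : R * R) : R * R :=
  (( mxapp2 A x).1 + y.1, (mxapp2 A x).2 + y.2).

(* Support of a measure on R^2: points all of whose (open) balls have
   positive measure (= the smallest closed set of full measure). *)
Definition msupp {R : realType} (mu : set (R * R) -> \bar R) : set (R * R) :=
  [set x | forall e : R, 0 < e -> (0 < mu (ball x e))%E].

(* Dimension of the affine hull of S ⊆ R^2 is > 1, i.e. S contains three
   affinely independent points. *)
Definition affdim_gt1 {R : realType} (S : set (R * R)) : Prop :=
  exists x0 x1 x2, [/\ S x0, S x1, S x2 &
    (x1.1 - x0.1) * (x2.2 - x0.2) - (x1.2 - x0.2) * (x2.1 - x0.1) != 0].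

Definition Pcstar {R : realType} (mu : probability (R * R)%type R) : Prop :=
  compact (msupp mu) /\ affdim_gt1 (msupp mu).

Definition radon {R : realType} (mu : set (R * R) -> \bar R) (theta : R * R)
  : set R -> \bar R := pushforward mu (fun x => dot2 x theta).

Definition cdf {R : realType} (nu : set R -> \bar R) (t : R) : R :=
  fine (nu [set` `]-oo, t]]).

(* Generalized inverse F^[-1](t) = inf { s | F(s) > t }, valued in the
   extended reals (inf of the empty set is +oo). *)
Definition ginv {R : realType} (F : R -> R) (t : R) : \bar R :=
  ereal_inf [set s%:E | s in [set s : R | t < F s]].

Definition cdt {R : realType} (rho : set R -> \bar R) (nu : set R -> \bar R)
  : R -> \bar R := fun t => ginv (cdf nu) (cdf rho t).

Definition mean {R : realType} (rho : probability R R) (g : R -> \bar R) : R :=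
  fine (\int[rho]_x g x)%E.

Definition std {R : realType} (rho : probability R R) (g : R -> \bar R) : R :=
  Num.sqrt (fine (\int[rho]_x ((g x - (mean rho g)%:E) * (g x - (mean rho g)%:E)))%E).

Definition NRCDT {R : realType} (rho : probability R R)
  (mu : set (R * R) -> \bar R) (theta : R * R) : R -> \bar R :=
  fun t => let g := cdt rho (radon mu theta) in
    ((g t - (mean rho g)%:E) * ((std rho g)^-1)%:E)%E.

Definition mu_Ay {R : realType} (mu : set (R * R) -> \bar R) (A : 'M[R]_2)
  (y : R * R) : set (R * R) -> \bar R := pushforward mu (affmap2 A y).

(* Main.v *)
Require Import Defs.
From HB Require Import structures.
From mathcomp Require Import all_boot all_order all_algebra.
From mathcomp Require Import all_classical all_reals all_analysis.
From mathcomp Require Import measurable_realfun.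
From mathcomp Require Import ring lra.
Import Order.TTheory GRing.Theory Num.Theory.
Import numFieldNormedType.Exports.
Local Open Scope classical_set_scope.
Local Open Scope ring_scope.

Section Helpers.
Variable R : realType.

Lemma ginv_aff (F : R -> R) (c b u : R) : 0 < c ->
  ginv (fun t => F ((t - b) / c)) u = (c%:E * ginv F u + b%:E)%E.
Proof.
move=> c0; rewrite /ginv.
set X := ereal_inf [set s%:E | s in [set s | u < F ((s - b) / c)]].
set I := ereal_inf [set s%:E | s in [set s | u < F s]].
have hX : forall s, u < F s -> (X <= (c * s + b)%:E)%E.
  move=> s hs; apply: ereal_inf_lbound; exists (c * s + b) => //=.
  by rewrite addrK mulrC mulKf // gt_eqF.
have cfin : (c%:E \is a fin_num)%E by [].
have cpos : (0 < c%:E)%E by rewrite lte_fin.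
apply/eqP; rewrite eq_le; apply/andP; split.
- move: hX; case: X => [r| |] hX; last by rewrite leNye.
  + have hI : (((r - b) / c)%:E <= I)%E.
      apply: le_ereal_inf_tmp => _ [s hs <-]; rewrite lee_fin.
      have := hX s hs; rewrite lee_fin => h.
      by rewrite ler_pdivrMr // mulrC lerBlDr.
    have := hI; rewrite -(lee_pmul2l cfin cpos) => h2.
    apply: le_trans (leeD2r b%:E h2).
    by rewrite -EFinM -EFinD lee_fin mulrC divfK ?gt_eqF // subrK.
  + have hI : (+oo <= I)%E.
      apply: le_ereal_inf_tmp => _ [s hs <-].
      by have := hX s hs.
    have -> : I = +oo%E by apply/eqP; rewrite eq_le leey hI.
    by rewrite muleC gt0_mulye.
- apply: le_ereal_inf_tmp => _ [s hs <-].
  have hI : (I <= ((s - b) / c)%:E)%E by apply: ereal_inf_lbound; exists ((s - b) / c).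
  rewrite -(lee_pmul2l cfin cpos) in hI.
  have h2 := leeD2r b%:E hI.
  eapply le_trans; first exact: h2.
  by rewrite -EFinM -EFinD lee_fin mulrC divfK ?gt_eqF // subrK.
Qed.


Lemma negligible_count {d} {T : measurableType d} {mu : {measure set T -> \bar R}}
  {I : countType} {F : I -> set T} :
  (forall i, mu.-negligible (F i)) -> mu.-negligible (\bigcup_(i in [set: I]) F i).
Proof.
move=> hF.
have hG : mu.-negligible (\bigcup_n (oapp F set0 (@unpickle I n))).
  apply: negligible_bigcup => k; case: unpickle => [i|] /=; first exact: hF.
  exact: negligible_set0.
apply: negligibleS hG => x [i _ Fx]; exists (pickle i) => //.
by rewrite pickleK.
Qed.

Lemma rho_tail {rho : probability R R} {t : R} : (1 <= Defs.cdf rho t) ->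
  rho.-negligible [set x | t < x].
Proof.
move=> h1.
have mA : measurable [set` `]-oo, t]] by exact: measurable_itv.
have hA : rho [set` `]-oo, t]] = 1%E.
  have fA : rho [set` `]-oo, t]] \is a fin_num by exact: fin_num_measure.
  rewrite -(fineK fA); congr (_%:E); apply/eqP; rewrite eq_le h1 andbT.
  rewrite /Defs.cdf in h1 *.
  have := probability_measure.probability_le1 rho mA; rewrite -(fineK fA) lee_fin => ->.
  done.
exists (~` [set` `]-oo, t]]); split.
- exact: measurableC.
- by rewrite probability_setC // hA subee.
- by move=> x /= tx; rewrite in_itv /= leNgt tx.
Qed.

Lemma rho_T1 (rho : probability R R) (noatom : forall x : R, rho [set x] = 0%E) :
  rho.-negligible [set t | 1 <= Defs.cdf rho t].
Proof.
set T1 := [set t | 1 <= Defs.cdf rho t].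
have hZ : rho.-negligible [set x | T1 x /\ forall t', T1 t' -> x <= t'].
  case: (pselect (exists x0, T1 x0 /\ forall t', T1 t' -> x0 <= t')) => [[x0 [h1 h2]]|nex].
    exists [set x0]; split; first exact: measurable_set1.
      exact: noatom.
    move=> x [hx1 hx2] /=; apply/eqP; rewrite eq_le hx2 //= h2 //.
  exists set0; split => //.
  by move=> x hx; apply: nex; exists x.
have hQ : forall q : rat, rho.-negligible [set x | exists t', T1 t' /\ t' < ratr q < x].
  move=> q.
  case: (pselect (exists t', T1 t' /\ t' < ratr q)) => [[t' [h1 h2]]|nex].
    apply: negligibleS (rho_tail h1) => x [t'' [_ /andP[h3 h4]]] /=.
    exact: lt_trans h2 h4.
  exists set0; split => //.
  move=> x [t' [h1 /andP[h2 _]]]; apply: nex; exists t'; split => //.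
apply: negligibleS (negligibleU hZ (negligible_count hQ)) => t Tt.
case: (pselect (forall t', T1 t' -> t <= t')) => [hmin|]; first by left.
move=> /existsNP [t' /not_implyP [T1t' /negP]]; rewrite -ltNge => t't.
have [q] := rat_in_itvoo t't; rewrite in_itv /= => /andP[h1 h2].
right; exists q => //; exists t'; split => //; rewrite h1.
done.
Qed.


Lemma supp_null (mu : probability (R * R)%type R) : mu.-negligible (~` msupp mu).
Proof.
pose B (i : rat * rat * rat) : set (R * R) :=
  ball (((ratr i.1.1 : R), (ratr i.1.2 : R)) : R * R) (ratr i.2 : R).
have mB : forall i, measurable (B i).
  move=> i; have -> : B i = ball (ratr i.1.1 : R) (ratr i.2 : R) `*` ball (ratr i.1.2 : R) (ratr i.2 : R) by [].
  by apply: measurableX; exact: measurable_realfun.measurable_ball.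
have hZ : forall i, mu.-negligible [set x | mu (B i) = 0%E /\ B i x].
  move=> i; case: (pselect (mu (B i) = 0%E)) => [h0|hn].
    by exists (B i); split => // x [].
  by exists set0; split => // x [].
apply: negligibleS (negligible_count hZ) => x /= hx.
have [e [e0 he]] : exists e, 0 < e /\ mu (ball x e) = 0%E.
  move: hx; rewrite /msupp /= => /existsNP [e /not_implyP [e0 he]].
  exists e; split => //; apply/eqP; rewrite eq_le measure_ge0 andbT.
  by rewrite leNgt; apply/negP.
have e20 : 0 < e / 2 by rewrite divr_gt0.
have [q3] := rat_in_itvoo e20; rewrite in_itv /= => /andP[q30 q3e].
set r := ratr q3 in q30 q3e.
have /rat_in_itvoo [q1] : x.1 - r < x.1 + r by rewrite ltrD2l gtrN.
rewrite in_itv /= => /andP[q1l q1r].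
have /rat_in_itvoo [q2] : x.2 - r < x.2 + r by rewrite ltrD2l gtrN.
rewrite in_itv /= => /andP[q2l q2r].
have hxq1 : `|x.1 - ratr q1| < r by rewrite ltr_distlC q1l q1r.
have hxq2 : `|x.2 - ratr q2| < r by rewrite ltr_distlC q2l q2r.
have sub : B (q1, q2, q3) `<=` ball x e.
  move=> z [/= hz1 hz2]; split => /=.
    rewrite /ball /=; apply: (le_lt_trans (ler_distD (ratr q1) _ _)).
    have : `|ratr q1 - z.1| < r by [].
    move=> h; apply: (lt_le_trans (ltrD hxq1 h)).
    by rewrite [leRHS](splitr e) lerD // ltW.
  rewrite /ball /=; apply: (le_lt_trans (ler_distD (ratr q2) _ _)).
  have : `|ratr q2 - z.2| < r by [].
  move=> h; apply: (lt_le_trans (ltrD hxq2 h)).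
  by rewrite [leRHS](splitr e) lerD // ltW.
exists (q1, q2, q3) => //; split.
  apply/eqP; rewrite eq_le measure_ge0 andbT -he.
  have mbx : measurable (ball x e).
    have -> : ball x e = ball x.1 e `*` ball x.2 e by [].
    by apply: measurableX; exact: measurable_realfun.measurable_ball.
  apply: (@le_measure _ _ _ mu); rewrite ?inE //; exact: mB.
split => /=; rewrite /ball /= distrC //.
Qed.

Lemma mdot (w : R * R) : measurable_fun setT (fun x : R * R => dot2 x w).
Proof.
rewrite /dot2. apply: measurable_realfun.measurable_funD; apply: measurable_realfun.measurable_funM => //.
all: first [exact: measurable_fst | exact: measurable_snd].
Qed.

Lemma cdf_bounds (mu : probability (R * R)%type R) (hc : compact (msupp mu)) (w : R * R) :
  exists K, forall s, [/\ (K <= s -> Defs.cdf (radon mu w) s = 1) &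
                      (s < - K -> Defs.cdf (radon mu w) s = 0)].
Proof.
have [M0 [_ HM]] := compact_bounded hc.
have hM := HM (`|M0| + 1) (lt_le_trans (ltr_pwDr ltr01 (ler_norm M0)) (lexx _)).
set M := `|M0| + 1 in hM.
set K := M * (`|w.1| + `|w.2|).
have dotb : forall x, msupp mu x -> `|dot2 x w| <= K.
  move=> x /hM /= hx.
  have h1 : `|x.1| <= M by apply: le_trans hx; rewrite le_max lexx.
  have h2 : `|x.2| <= M by apply: le_trans hx; rewrite le_max lexx orbT.
  rewrite /dot2 /K mulrDr; apply: (le_trans (ler_normD _ _)).
  by rewrite !normrM lerD // ler_wpM2r.
have mE : forall s, measurable ((fun x => dot2 x w) @^-1` [set` `]-oo, s]]).
  move=> s; have := mdot w measurableT _ (measurable_itv `]-oo, s]).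
  by rewrite setTI.
have hN := supp_null mu.
exists K => s; split => hs.
- rewrite /Defs.cdf /radon /pushforward.
  have hC : mu (~` ((fun x => dot2 x w) @^-1` [set` `]-oo, s]])) = 0%E.
    apply/(negligibleP _ (measurableC (mE s))).
    apply: negligibleS hN => x /= hx hsx; apply: hx.
    rewrite in_itv /=; apply: le_trans hs.
    exact: le_trans (ler_norm _) (dotb x hsx).
  rewrite -[X in mu X]setCK probability_setC; last exact: measurableC.
  by rewrite hC sube0.
- rewrite /Defs.cdf /radon /pushforward.
  have -> : mu ((fun x => dot2 x w) @^-1` [set` `]-oo, s]]) = 0%E.
    apply/(negligibleP _ (mE s)).
    apply: negligibleS hN => x /= hx hsx.
    move: hx; rewrite in_itv /= => hx.
    have := dotb x hsx; rewrite ler_norml => /andP[h1 _].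
    by have := lt_le_trans (le_lt_trans h1 (le_lt_trans hx hs)) (lexx _); rewrite ltxx.
  done.
Qed.

Section Final.
Variables (rho : probability R R) (noatom : forall x : R, rho [set x] = 0%E).
Variables (P : R -> bool) (hP : forall t, ~~ P t -> 1 <= Defs.cdf rho t).
Hypothesis mP : measurable_fun setT P.

Definition GG (k : R -> R) : R -> \bar R := fun t => if P t then (k t)%:E else +oo%E.

Lemma mGG (k : R -> R) : measurable_fun [set: R] k -> measurable_fun [set: R] (GG k : R -> \bar R).
Proof.
move=> mk; apply: measurable_fun_ifT => //.
exact/measurable_EFinP.
Qed.

Lemma intGG k : measurable_fun setT k ->
  (\int[rho]_x GG k x = \int[rho]_x (k x)%:E)%E.
Proof.
move=> mk; apply: ae_eq_integral => //.
- exact: mGG.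
- exact/measurable_EFinP.
- rewrite /ae_eq /prop_near1 /almost_everywhere /=.
  change (rho.-negligible (~` [set x | True -> GG k x = (k x)%:E])).
  apply: negligibleS (rho_T1 rho noatom) => x /=.
  rewrite /GG; case: (boolP (P x)) => [Px|nPx]; first by case; move=> _.
  by move=> _; exact: hP.
Qed.

Lemma bnd_int (k : R -> R) (B : R) : measurable_fun setT k -> (forall t, `|k t| <= B) ->
  rho.-integrable setT (EFin \o k).
Proof.
move=> mk hk; apply: measurable_bounded_integrable => //.
  by apply: (le_lt_trans (probability_measure.probability_le1 rho measurableT)); rewrite ltry.
exists B; split; first exact: num_real.
move=> M hM x _; exact: le_trans (hk x) (ltW hM).
Qed.

Lemma final_eq (h : R -> R) (mh : measurable_fun setT h) (B : R)
  (hB : forall t, `|h t| <= B) (c b : R) (c0 : 0 < c) (t : R) :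
  let gold := GG h in let gnew := GG (fun t => c * h t + b) in
  ((gnew t - (Defs.mean rho gnew)%:E) * ((Defs.std rho gnew)^-1)%:E =
   (gold t - (Defs.mean rho gold)%:E) * ((Defs.std rho gold)^-1)%:E)%E.
Proof.
move=> gold gnew.
have ih := bnd_int _ _ mh hB.
set I := (\int[rho]_x (h x)%:E)%E.
have Ifin : I \is a fin_num by exact: integrable_fin_num ih.
have mold : Defs.mean rho gold = fine I by rewrite /Defs.mean intGG.
set m := fine I in mold.
have mcb : measurable_fun setT (fun x => c * h x + b).
  apply: measurable_funD => //; apply: measurable_funM => //.
have icst : rho.-integrable setT (fun _ => b%:E).
  apply: (bnd_int (cst b) `|b|) => //.
have mnew : Defs.mean rho gnew = c * m + b.
  rewrite /Defs.mean intGG //.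
  have -> : (fun x => (c * h x + b)%:E) = (fun x => (c%:E * (h x)%:E) + b%:E)%E.
    by apply: funext => x; rewrite EFinD EFinM.
  rewrite integralD //; last exact: integrableZl.
  rewrite integralZl // (integral_cst rho measurableT b%:E).
  apply: (@eq_trans _ _ (fine (c%:E * I + b%:E * 1))%E).
    by congr (fine (_ + (_ * _)))%E; exact: probability_setT.
  by rewrite mule1 -(fineK Ifin) -EFinM -EFinD.
set q := fun x => (h x - m) * (h x - m).
have mq : measurable_fun setT q.
  by apply: measurable_funM; apply: measurable_funB.
have qb : forall x, `|q x| <= (B + `|m|) * (B + `|m|).
  move=> x; rewrite /q normrM.
  have h1 : `|h x - m| <= B + `|m| by apply: le_trans (ler_normB _ _) _; rewrite lerD.
  by apply: ler_pM.
have iq := bnd_int _ _ mq qb.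
have Jfin : (\int[rho]_x (q x)%:E)%E \is a fin_num by exact: integrable_fin_num iq.
have sqold : (fun x => (gold x - m%:E) * (gold x - m%:E))%E = GG q.
  apply: funext => x; rewrite /gold /GG; case: (P x) => //.
have sqnew : (fun x => (gnew x - (c * m + b)%:E) * (gnew x - (c * m + b)%:E))%E =
    GG (fun x => c ^+ 2 * q x).
  apply: funext => x; rewrite /gnew /GG; case: (P x) => //.
  rewrite -EFinB -EFinM /q; congr EFin; ring.
have mcq : measurable_fun setT (fun x => c ^+ 2 * q x).
  by apply: measurable_funM.
rewrite /Defs.std mnew mold sqold sqnew !intGG //.
have -> : (\int[rho]_x (c ^+ 2 * q x)%:E = (c ^+ 2)%:E * \int[rho]_x (q x)%:E)%E.
  rewrite -integralZl //; apply: eq_integral => x _; by rewrite EFinM.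
rewrite -(fineK Jfin) -EFinM /= sqrtrM ?sqr_ge0 // sqrtr_sqr gtr0_norm //.
set sd := Num.sqrt (fine _).
have sd0 : 0 <= sd by exact: sqrtr_ge0.
rewrite /gnew /gold /GG; case: (P t).
  rewrite -!EFinB -!EFinM; congr EFin.
  have -> : c * h t + b - (c * m + b) = c * (h t - m) by ring.
  by rewrite invfM mulrACA mulfV ?gt_eqF // mul1r.
case: (eqVneq sd 0) => [->|sdn0]; first by rewrite mulr0 invr0 !mule0.
have sdp : 0 < sd by rewrite lt_neqAle eq_sym sdn0 sd0.
rewrite /= !gt0_mulye // lte_fin invr_gt0 //; exact: mulr_gt0.
Qed.

End Final.


Lemma ginv_props (F : R -> R) (K : R) (hF1 : forall s, K <= s -> F s = 1)
  (hF0 : forall s, s < - K -> F s = 0) (hF : forall s, F s <= 1) (u : R) (u0 : 0 <= u) :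
  [/\ (u < 1 -> ((- `|K|)%:E <= ginv F u)%E /\ (ginv F u <= `|K|%:E)%E) &
      (~~ (u < 1) -> ginv F u = +oo%E)].
Proof.
split.
- move=> u1; split.
  + apply: le_ereal_inf_tmp => _ [s hs <-]; rewrite lee_fin.
    rewrite leNgt; apply/negP => sK.
    have : F s = 0 by apply: hF0; apply: lt_le_trans sK _; rewrite lerN2 ler_norm.
    by move=> F0; move: hs; rewrite /= F0 ltNge u0.
  + apply: ereal_inf_lbound; exists `|K| => //=; rewrite hF1 ?ler_norm //.
- move=> nu1; rewrite /ginv.
  have -> : [set s | u < F s] = set0.
    apply/seteqP; split => s //= hs; move: nu1; rewrite (lt_le_trans hs (hF s)).
    done.
  by rewrite image_set0 ereal_inf0.
Qed.

Lemma ginv_mono (F : R -> R) (u1 u2 : R) : u1 <= u2 -> (ginv F u1 <= ginv F u2)%E.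
Proof.
move=> u12; apply: ereal_inf_le_tmp => _ [s hs <-]; exists s => //=.
exact: le_lt_trans u12 hs.
Qed.

Lemma fine01 {d} {T : measurableType d} (Q : probability T R) (A : set T) :
  measurable A -> 0 <= fine (Q A) <= 1.
Proof.
move=> mA; rewrite fine_ge0 ?measure_ge0 //=.
have := probability_measure.probability_le1 Q mA.
have fA : Q A \is a fin_num by exact: fin_num_measure.
by rewrite -(fineK fA) lee_fin.
Qed.

Lemma cdf_mono (rho : probability R R) (t1 t2 : R) : t1 <= t2 ->
  Defs.cdf rho t1 <= Defs.cdf rho t2.
Proof.
move=> t12; rewrite /Defs.cdf; apply: fine_le.
- exact: fin_num_measure.
- exact: fin_num_measure.
apply: (@le_measure _ _ _ rho); rewrite ?inE; try exact: measurable_itv.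
by move=> x /=; rewrite !in_itv /= => /le_trans; apply.
Qed.

Lemma det2 (A : 'M[R]_2) : \det A = A 0 0 * A 1 1 - A 0 1 * A 1 0.
Proof.
rewrite (expand_det_row _ 0) !big_ord_recl big_ord0 /cofactor !det_mx11 !mxE /=.
have l1 : (lift 0 0 : 'I_2) = 1 by apply/val_inj.
have l2 : (lift (lift ord0 ord0) 0 : 'I_2) = 0 by apply/val_inj.
have l3 : (lift ord0 0 : 'I_2) = 1 by apply/val_inj.
have l4 : (lift ord0 ord0 : 'I_2) = 1 by apply/val_inj.
have l5 : (ord0 : 'I_2) = 0 by apply/val_inj.
rewrite l2 l1 ?l3 ?l4 ?l5 /= expr0 expr1; ring.
Qed.

End Helpers.

Theorem proposition6 (R : realType) (rho : probability R R)
  (rho_noatom : forall x : R, rho [set x] = 0%E)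
  (mu : probability (R * R)%type R) (hmu : Pcstar mu)
  (A : 'M[R]_2) (hA : A \in unitmx) (y theta : R * R) (htheta : S1 theta) :
  forall t : R,
    NRCDT rho (mu_Ay mu A y) theta t =
    NRCDT rho mu (scale2 (norm2 (mxapp2 A^T theta))^-1 (mxapp2 A^T theta)) t.
Proof.
move=> t.
set v := mxapp2 A^T theta.
set c := norm2 v.
set w := scale2 c^-1 v.
set b := dot2 y theta.
have detA : \det A != 0 by move: hA; rewrite unitmxE unitfE.
have sq : forall r : R, 0 <= r * r by move=> r; exact: sqr_ge0.
have vv : 0 < dot2 v v.
  have ge : 0 <= dot2 v v by rewrite /dot2 addr_ge0 // sq.
  rewrite lt_neqAle ge andbT eq_sym; apply/negP => /eqP.
  move/eqP; rewrite /dot2 paddr_eq0 ?sq // !mulf_eq0 !orbb => /andP[/eqP v1 /eqP v2].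
  move: htheta; rewrite /S1 /= /norm2 /dot2.
  have t1 : \det A * theta.1 = A 1 1 * v.1 - A 1 0 * v.2.
    by rewrite det2 /v /mxapp2 /= !mxE; ring.
  have t2 : \det A * theta.2 = A 0 0 * v.2 - A 0 1 * v.1.
    by rewrite det2 /v /mxapp2 /= !mxE; ring.
  rewrite v1 v2 !mulr0 subr0 in t1 t2.
  move/eqP: t1; rewrite mulf_eq0 (negbTE detA) /= => /eqP ->.
  move/eqP: t2; rewrite mulf_eq0 (negbTE detA) /= => /eqP ->.
  by rewrite !mulr0 addr0 sqrtr0 => /esym/eqP; rewrite oner_eq0.
have c0 : 0 < c by rewrite /c /norm2 sqrtr_gt0.
have K1 : forall x, dot2 (affmap2 A y x) theta = c * dot2 x w + b.
  move=> x; rewrite /affmap2 /w /scale2 /b /v /mxapp2 /dot2 /= !mxE.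
  field; exact: lt0r_neq0.
have K3 : Defs.cdf (radon (mu_Ay mu A y) theta) =
    (fun s => Defs.cdf (radon mu w) ((s - b) / c)).
  apply: funext => s; rewrite /Defs.cdf /radon /mu_Ay /pushforward.
  congr (fine (mu _)); apply: funext => x /=; apply: propext.
  by rewrite !in_itv /= K1 ler_pdivlMr // lerBrDr mulrC.
have gnewE : cdt rho (radon (mu_Ay mu A y) theta) =
    (fun s => c%:E * cdt rho (radon mu w) s + b%:E)%E.
  by apply: funext => s; rewrite /cdt K3 ginv_aff.
have [K hK] := @cdf_bounds R mu hmu.1 w.
have mE : forall s, measurable ((fun x => dot2 x w) @^-1` [set` `]-oo, s]]).
  move=> s; have := @mdot R w measurableT _ (measurable_itv `]-oo, s]).
  by rewrite setTI.
have hF : forall s, Defs.cdf (radon mu w) s <= 1.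
  by move=> s; have /andP[] := @fine01 R _ _ mu _ (mE s).
have rho0 : forall s, 0 <= Defs.cdf rho s.
  by move=> s; have /andP[] := @fine01 R _ _ rho _ (measurable_itv `]-oo, s]).
set K' := `|K|.
pose P := fun s => Defs.cdf rho s < 1.
have gP : forall s, P s -> ((- K')%:E <= cdt rho (radon mu w) s)%E /\ (cdt rho (radon mu w) s <= K'%:E)%E.
  move=> s Ps; have [h1 _] := @ginv_props R _ K (fun s => (hK s).1) (fun s => (hK s).2) hF _ (rho0 s).
  exact: h1 Ps.
have gnP : forall s, ~~ P s -> cdt rho (radon mu w) s = +oo%E.
  move=> s Ps; have [_ h2] := @ginv_props R _ K (fun s => (hK s).1) (fun s => (hK s).2) hF _ (rho0 s).
  exact: h2 Ps.
pose hb := fun s => if P s then fine (cdt rho (radon mu w) s) else K'.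
have gG : cdt rho (radon mu w) = @GG R P hb.
  apply: funext => s; rewrite /GG /hb; case: (boolP (P s)) => Ps; last exact: gnP.
  have [h1 h2] := gP s Ps; move: h1 h2.
  by case: (cdt rho (radon mu w) s).
have Kge : 0 <= K' by exact: normr_ge0.
have hbB : forall s, `|hb s| <= K'.
  move=> s; rewrite /hb; case: (boolP (P s)) => Ps; last by rewrite ger0_norm.
  have [h1 h2] := gP s Ps; move: h1 h2.
  case: (cdt rho (radon mu w) s) => //= r; rewrite !lee_fin => h1 h2.
  by rewrite ler_norml h1 h2.
have Pmono : forall s1 s2, s1 <= s2 -> P s2 -> P s1.
  by move=> s1 s2 s12; rewrite /P; apply: le_lt_trans; exact: cdf_mono.
have hbmono : nondecreasing_fun hb.
  move=> s1 s2 s12; rewrite /hb.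
  case: (boolP (P s2)) => P2.
    have P1 := Pmono _ _ s12 P2; rewrite P1.
    have [a1 b1] := gP s1 P1; have [a2 b2] := gP s2 P2.
    have gm : (cdt rho (radon mu w) s1 <= cdt rho (radon mu w) s2)%E.
      by apply: ginv_mono; exact: cdf_mono.
    move: a1 b1 a2 b2 gm.
    case: (cdt rho (radon mu w) s1) => //= r1; case: (cdt rho (radon mu w) s2) => //= r2.
  case: (boolP (P s1)) => P1 //.
  have [a1 b1] := gP s1 P1; move: a1 b1.
  case: (cdt rho (radon mu w) s1) => //= r1.
have mhb : measurable_fun setT hb by apply: nondecreasing_measurable.
have mP : measurable_fun setT P.
  apply: (measurable_fun_bool true); rewrite setTI.
  apply: is_interval_measurable => x z /= hx hz u /andP[xu uz].
  exact: Pmono uz hz.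
have hP : forall s, ~~ P s -> 1 <= Defs.cdf rho s by move=> s; rewrite /P -leNgt.
rewrite /NRCDT /= gnewE gG.
have E : (fun s => c%:E * GG R P hb s + b%:E)%E = GG R P (fun s => c * hb s + b).
  apply: funext => s; rewrite /GG; case: (P s) => //; by rewrite muleC gt0_mulye ?lte_fin.
have Et := congr1 (fun f => f t) E; simpl in Et.
rewrite Et E.
exact: (@final_eq R rho rho_noatom P hP mP hb mhb K' hbB c b c0 t).
Qed.
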